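(* Let $(M^3,J,\theta)$ be a pseudohermitian 3-manifold with frame $Z_1$, coframe $\theta^1$, connection form $\theta_1{}^1$ and torsion $A^1{}_{\bar1}$ as in the context, and let $\phi\in C^\infty(M)$ be complex with $|\phi|<1$. Let $F=(1-|\phi|^2)^{-1/2}$ and consider the CR structure spanned by $Z_{\bar1}^\phi=F(Z_{\bar1}+\phi Z_1)$ with the same contact form $\theta$ and admissible coframe $\theta^1_\phi=F(\theta^1-\phi\theta^{\bar1})$ (so that $d\theta=i\theta^1_\phi\wedge\theta^{\bar1}_\phi$). Then its Tanaka–Webster connection form $\theta_1{}^1{}_\phi$ and torsion $A^1{}_{\bar1}{}^\phi$ (defined by $\tau^1_\phi=A^1{}_{\bar1}{}^\phi\theta^{\bar1}_\phi$) are $$\theta_1{}^1{}_\phi=\theta_1{}^1-F^{-1}dF-F^{-1}(B_{11}\theta^1+B_{12}\theta^{\bar1}+B_{13}\theta),$$ $$A^1{}_{\bar1}{}^\phi=A^1{}_{\bar1}-F^2\big(\phi_0+\phi\theta_1{}^1(T)-\phi\theta_{\bar1}{}^{\bar1}(T)+\phi^2A^{\bar1}{}_1-|\phi|^2A^1{}_{\bar1}\big),$$ where $B_{11}=F^2\big(-2F_1-\bar\phi F\theta_{\bar1}{}^{\bar1}(Z_{\bar1})+\bar\phi F\theta_1{}^1(Z_{\bar1})-F\bar\phi_{\bar1}-\bar\phi F\phi_1-2\bar\phi F_{\bar1}-|\phi|^2F\theta_1{}^1(Z_1)+|\phi|^2F\theta_{\bar1}{}^{\bar1}(Z_1)\big)$,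 $B_{12}=F^2\big(2|\phi|^2F_{\bar1}+\phi F\theta_1{}^1(Z_1)-\phi F\theta_{\bar1}{}^{\bar1}(Z_1)+F\phi_1+\phi F\bar\phi_{\bar1}+2\phi F_1+|\phi|^2F\theta_{\bar1}{}^{\bar1}(Z_{\bar1})-|\phi|^2F\theta_1{}^1(Z_{\bar1})\big)$, $B_{13}=F^3\big(-\bar\phi(\phi_0+\phi\theta_1{}^1(T)-\phi\theta_{\bar1}{}^{\bar1}(T))+\bar\phi A^1{}_{\bar1}-\phi A^{\bar1}{}_1\big)$.
   Context: $\theta$ contact form, $T$ Reeb field, $Z_1$ local frame of $T_{1,0}$, $Z_{\bar1}=\overline{Z_1}$, $\{\theta,\theta^1,\theta^{\bar1}\}$ dual to $\{T,Z_1,Z_{\bar1}\}$ with $d\theta=i\theta^1\wedge\theta^{\bar1}$. For a coframe $\{\theta,\vartheta^1,\vartheta^{\bar1}\}$ with $d\theta=i\vartheta^1\wedge\vartheta^{\bar1}$, the connection form $\vartheta_1{}^1$ and torsion form $\tau^1$ are uniquely determined by $d\vartheta^1=\vartheta^1\wedge\vartheta_1{}^1+\theta\wedge\tau^1$, $\tau^1\equiv0\bmod\vartheta^{\bar1}$, $\vartheta_1{}^1+\vartheta_{\bar1}{}^{\bar1}=0$. For the original coframe, $\tau^1=A^1{}_{\bar1}\theta^{\bar1}$; $A^{\bar1}{}_1=\overline{A^1{}_{\bar1}}$, $\theta_{\bar1}{}^{\bar1}=\overline{\theta_1{}^1}$. Notation: $\phi_1=Z_1\phi$, $\bar\phi_{\bar1}=Z_{\bar1}\bar\phi$,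 $F_1=Z_1F$, $F_{\bar1}=Z_{\bar1}F$, $\phi_0=T\phi$. *)

(* Defs.v *)
(* Abstract local model of a pseudohermitian 3-manifold
   described through a global frame {T, Z_1, Z_{\bar 1}} and its dual coframe
   {theta, theta^1, theta^{\bar 1}}. *)
From mathcomp Require Import all_boot all_order all_algebra.
Set Implicit Arguments. Unset Strict Implicit. Unset Printing Implicit Defensive.
Import Order.TTheory GRing.Theory Num.Theory.
Local Open Scope ring_scope.

Section PH.
Variables (C : numClosedFieldType) (M : Type).

Definition fn := M -> C.
Definition cstf (c : C) : fn := fun _ => c.
Definition conjf (f : fn) : fn := fun x => (f x)^*.

(* 1-forms, given by their values on the frame (T, Z_1, Z_{\bar1}),
   i.e. by their coefficients in the coframe (theta, theta^1, theta^{\bar1}) *)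
Record form1 := Form1 { fT : fn; fZ : fn; fZb : fn }.
(* 2-forms, given by their values on (Z_1,Z_{\bar1}), (T,Z_1), (T,Z_{\bar1}) *)
Record form2 := Form2 { gZZb : fn; gTZ : fn; gTZb : fn }.
(* vector fields written in the frame: vT T + vZ Z_1 + vZb Z_{\bar1} *)
Record vfield := VF { vT : fn; vZ : fn; vZb : fn }.

Definition eval1 (a : form1) (v : vfield) : fn :=
  fun x => vT v x * fT a x + vZ v x * fZ a x + vZb v x * fZb a x.

Definition add1 (a b : form1) : form1 :=
  Form1 (fun x => fT a x + fT b x) (fun x => fZ a x + fZ b x)
        (fun x => fZb a x + fZb b x).
Definition scale1 (g : fn) (a : form1) : form1 :=
  Form1 (fun x => g x * fT a x) (fun x => g x * fZ a x) (fun x => g x * fZb a x).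
Definition zero1 : form1 := Form1 (cstf 0) (cstf 0) (cstf 0).
(* complex conjugate of a 1-form: (conj a)(X) = conj (a (conj X)) *)
Definition conj1 (a : form1) : form1 :=
  Form1 (conjf (fT a)) (conjf (fZb a)) (conjf (fZ a)).

Definition add2 (a b : form2) : form2 :=
  Form2 (fun x => gZZb a x + gZZb b x) (fun x => gTZ a x + gTZ b x)
        (fun x => gTZb a x + gTZb b x).
Definition scale2 (g : fn) (a : form2) : form2 :=
  Form2 (fun x => g x * gZZb a x) (fun x => g x * gTZ a x)
        (fun x => g x * gTZb a x).
(* (a /\ b)(X,Y) = a(X) b(Y) - a(Y) b(X) *)
Definition wedge (a b : form1) : form2 :=
  Form2 (fun x => fZ a x * fZb b x - fZb a x * fZ b x)
        (fun x => fT a x * fZ b x - fZ a x * fT b x)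
        (fun x => fT a x * fZb b x - fZb a x * fT b x).

Definition theta : form1 := Form1 (cstf 1) (cstf 0) (cstf 0).
Definition theta1 : form1 := Form1 (cstf 0) (cstf 1) (cstf 0).
Definition theta1b : form1 := Form1 (cstf 0) (cstf 0) (cstf 1).

Record phframe := PHFrame {
  smooth : fn -> Prop;
  Tder : fn -> fn;
  Zder : fn -> fn;
  brTZ : vfield;
  brTZb : vfield;
  brZZb : vfield;
  omega : form1;
  Ator : fn
}.

Variable P : phframe.

Definition Zbder (f : fn) : fn := conjf (Zder P (conjf f)).

Definition d0 (f : fn) : form1 := Form1 (Tder P f) (Zder P f) (Zbder f).
Definition d1 (a : form1) : form2 :=
  Form2 (fun x => Zder P (fZb a) x - Zbder (fZ a) x - eval1 a (brZZb P) x)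
        (fun x => Tder P (fZ a) x - Zder P (fT a) x - eval1 a (brTZ P) x)
        (fun x => Tder P (fZb a) x - Zbder (fT a) x - eval1 a (brTZb P) x).

(* Defining equations of the (Tanaka-Webster) connection form om and torsion
   coefficient A (tau^1 = A vartheta^{\bar1}) of an admissible coframe
   (theta, vt, conj vt):  d theta = i vt /\ conj vt,
   d vt = vt /\ om + theta /\ tau,  tau = A conj vt,  om + conj om = 0. *)
Definition TW (vt om : form1) (A : fn) : Prop :=
  [/\ d1 theta = scale2 (cstf 'i) (wedge vt (conj1 vt)),
      d1 vt = add2 (wedge vt om) (wedge theta (scale1 A (conj1 vt))) &
      add1 om (conj1 om) = zero1].

Definition is_derivation (X : fn -> fn) : Prop :=
  [/\ forall f, smooth P f -> smooth P (X f),
      forall c, X (cstf c) = cstf 0,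
      forall f g, smooth P f -> smooth P g ->
        X (fun x => f x + g x) = (fun x => X f x + X g x) &
      forall f g, smooth P f -> smooth P g ->
        X (fun x => f x * g x) = (fun x => X f x * g x + f x * X g x)].

Definition smooth_vf (v : vfield) : Prop :=
  [/\ smooth P (vT v), smooth P (vZ v) & smooth P (vZb v)].

Record ph_axioms : Prop := {
  sm_cst : forall c, smooth P (cstf c);
  sm_add : forall f g, smooth P f -> smooth P g -> smooth P (fun x => f x + g x);
  sm_mul : forall f g, smooth P f -> smooth P g -> smooth P (fun x => f x * g x);
  sm_opp : forall f, smooth P f -> smooth P (fun x => - f x);
  sm_conj : forall f, smooth P f -> smooth P (conjf f);
  sm_invsqrt : forall f, smooth P f -> (forall x, 0 < f x) ->
      smooth P (fun x => (sqrtC (f x))^-1);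
  T_der : is_derivation (Tder P);
  Z_der : is_derivation (Zder P);
  T_real : forall f, smooth P f -> Tder P (conjf f) = conjf (Tder P f);
  (* (T, Z_1, Z_{\bar1}) is a frame: pointwise linearly independent *)
  frame_indep : forall a b c : fn,
      (forall f, smooth P f -> forall x,
          a x * Tder P f x + b x * Zder P f x + c x * Zbder f x = 0) ->
      forall x, [/\ a x = 0, b x = 0 & c x = 0];
  br_sm : [/\ smooth_vf (brTZ P), smooth_vf (brTZb P) & smooth_vf (brZZb P)];
  br_TZ : forall f, smooth P f ->
      (fun x => Tder P (Zder P f) x - Zder P (Tder P f) x) = eval1 (d0 f) (brTZ P);
  br_TZb : forall f, smooth P f ->
      (fun x => Tder P (Zbder f) x - Zbder (Tder P f) x) = eval1 (d0 f) (brTZb P);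
  br_ZZb : forall f, smooth P f ->
      (fun x => Zder P (Zbder f) x - Zbder (Zder P f) x) = eval1 (d0 f) (brZZb P);
  om_sm : [/\ smooth P (fT (omega P)), smooth P (fZ (omega P)) &
              smooth P (fZb (omega P))];
  A_sm : smooth P (Ator P);
  structure : TW theta1 (omega P) (Ator P)
}.

Variable phi : fn.

Definition Ff : fn := fun x => (sqrtC (1 - `|phi x| ^+ 2))^-1.

Definition theta1_phi : form1 :=
  Form1 (cstf 0) Ff (fun x => - (Ff x * phi x)).

Definition om11 := omega P.
Definition om1b1b := conj1 (omega P).
Definition Abar : fn := conjf (Ator P).
Definition phib : fn := conjf phi.

Definition B11 : fn := fun x =>
  Ff x ^+ 2 * (- 2%:R * Zder P Ff x
     - phib x * Ff x * fZb om1b1b x + phib x * Ff x * fZb om11 x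
     - Ff x * Zbder phib x - phib x * Ff x * Zder P phi x
     - 2%:R * phib x * Zbder Ff x
     - `|phi x| ^+ 2 * Ff x * fZ om11 x + `|phi x| ^+ 2 * Ff x * fZ om1b1b x).

Definition B12 : fn := fun x =>
  Ff x ^+ 2 * (2%:R * `|phi x| ^+ 2 * Zbder Ff x
     + phi x * Ff x * fZ om11 x - phi x * Ff x * fZ om1b1b x
     + Ff x * Zder P phi x + phi x * Ff x * Zbder phib x
     + 2%:R * phi x * Zder P Ff x
     + `|phi x| ^+ 2 * Ff x * fZb om1b1b x - `|phi x| ^+ 2 * Ff x * fZb om11 x).

Definition B13 : fn := fun x =>
  Ff x ^+ 3 * (- phib x * (Tder P phi x + phi x * fT om11 x - phi x * fT om1b1b x)
     + phib x * Ator P x - phi x * Abar x).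

Definition omega_phi : form1 :=
  Form1 (fun x => fT om11 x - (Ff x)^-1 * Tder P Ff x - (Ff x)^-1 * B13 x)
        (fun x => fZ om11 x - (Ff x)^-1 * Zder P Ff x - (Ff x)^-1 * B11 x)
        (fun x => fZb om11 x - (Ff x)^-1 * Zbder Ff x - (Ff x)^-1 * B12 x).

Definition A_phi : fn := fun x =>
  Ator P x - Ff x ^+ 2 * (Tder P phi x + phi x * fT om11 x - phi x * fT om1b1b x
     + phi x ^+ 2 * Abar x - `|phi x| ^+ 2 * Ator P x).

End PH.

(* Main.v *)
Require Import Defs.
From mathcomp Require Import all_boot all_order all_algebra ring.
From Stdlib Require Import FunctionalExtensionality.
Set Implicit Arguments. Unset Strict Implicit. Unset Printing Implicit Defensive.
Import Order.TTheory GRing.Theory Num.Theory.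
Local Open Scope ring_scope.

Lemma conjfK (C : numClosedFieldType) (M : Type) (f : fn C M) : conjf (conjf f) = f.
Proof. by apply: functional_extensionality => x; rewrite /conjf conjCK. Qed.

Lemma conjf_cst (C : numClosedFieldType) (M : Type) (c : C) :
  conjf (cstf (M:=M) c) = cstf (M:=M) c^*.
Proof. by []. Qed.

Lemma conj_Z (C : numClosedFieldType) (M : Type) (P : phframe C M) f :
  conjf (Zder P f) = Zbder P (conjf f).
Proof. by rewrite /Zbder conjfK. Qed.

Lemma conj_Zb (C : numClosedFieldType) (M : Type) (P : phframe C M) f :
  conjf (Zbder P f) = Zder P (conjf f).
Proof. by rewrite /Zbder conjfK. Qed.

Definition sder (C : numClosedFieldType) (M : Type) (P : phframe C M) (X : fn C M -> fn C M) :=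
  [/\ forall c, X (cstf (M:=M) c) = cstf (M:=M) 0,
      forall f g, smooth P f -> smooth P g ->
        X (fun x => f x + g x) = (fun x => X f x + X g x) &
      forall f g, smooth P f -> smooth P g ->
        X (fun x => f x * g x) = (fun x => X f x * g x + f x * X g x)].

Lemma der_sder (C : numClosedFieldType) (M : Type) (P : phframe C M) X :
  is_derivation P X -> sder P X.
Proof. by case. Qed.

Lemma Zb_sder (C : numClosedFieldType) (M : Type) (P : phframe C M) :
  ph_axioms P -> sder P (Zbder P).
Proof.
move=> HP; have [_ Zc Za Zm] := Z_der HP; split.
- move=> c; rewrite /Zbder conjf_cst Zc.
  by apply: functional_extensionality => x; rewrite /conjf /cstf conjC0.
- move=> f g sf sg; rewrite /Zbder.
  have -> : conjf (fun x => f x + g x) = (fun x => conjf f x + conjf g x).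
    by apply: functional_extensionality => x; rewrite /conjf rmorphD.
  rewrite Za; try exact: sm_conj.
  by apply: functional_extensionality => x; rewrite /conjf rmorphD.
- move=> f g sf sg; rewrite /Zbder.
  have -> : conjf (fun x => f x * g x) = (fun x => conjf f x * conjf g x).
    by apply: functional_extensionality => x; rewrite /conjf rmorphM.
  rewrite Zm; try exact: sm_conj.
  apply: functional_extensionality => x; rewrite /conjf rmorphD !rmorphM.
  by rewrite /= !conjCK.
Qed.

Lemma dnegmul (C : numClosedFieldType) (M : Type) (P : phframe C M) X :
  ph_axioms P -> sder P X -> forall f g, smooth P f -> smooth P g ->
  X (fun x => - (f x * g x)) = (fun x => - (X f x * g x + f x * X g x)).
Proof.
move=> HP [Xc Xa Xm] f g sf sg.
have -> : (fun x => - (f x * g x)) = (fun x => cstf (M:=M) (-1) x * (fun y => f y * g y) x).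
  by apply: functional_extensionality => x; rewrite /cstf mulN1r.
rewrite Xm; [|exact: sm_cst|exact: sm_mul].
rewrite Xc Xm //; apply: functional_extensionality => x; rewrite /cstf; ring.
Qed.
Lemma algF (C : numClosedFieldType) (F g XF Xg : C) :
  F ^+ 2 * g = 1 -> (XF * F + F * XF) * g + F * F * Xg = 0 ->
  XF = - F ^+ 3 * Xg / 2%:R.
Proof.
move=> h1 h2.
have h3 : (XF * F + F * XF) * g = - (F * F * Xg) by apply/eqP; rewrite -addr_eq0 h2.
have -> : XF = XF * (F ^+ 2 * g) by rewrite h1 mulr1.
transitivity (F / 2%:R * ((XF * F + F * XF) * g)); first by field.
by rewrite h3; field.
Qed.

Lemma F_props (C : numClosedFieldType) (M : Type) (phi : fn C M) :
  (forall x, `|phi x| < 1) -> forall x,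
  [/\ 0 < Ff phi x, (Ff phi x)^* = Ff phi x,
      Ff phi x ^+ 2 * (1 - phi x * (phi x)^*) = 1 &
      1 - `|phi x| ^+ 2 = 1 - phi x * (phi x)^*].
Proof.
move=> hphi x.
have hg : 0 < 1 - `|phi x| ^+ 2.
  by rewrite subr_gt0 exprn_ilt1.
have hs : 0 < sqrtC (1 - `|phi x| ^+ 2) by rewrite sqrtC_gt0.
have hF : 0 < Ff phi x by rewrite /Ff invr_gt0.
split => //; first exact: geC0_conj (ltW hF).
- rewrite /Ff -normCK exprVn sqrtCK mulVf //; exact: lt0r_neq0.
- by rewrite normCK.
Qed.

Lemma gg_eq (C : numClosedFieldType) (M : Type) (phi : fn C M) :
  (fun x => 1 - `|phi x| ^+ 2) =
  (fun x => cstf (M:=M) 1 x + (fun y => cstf (M:=M) (-1) y * (fun z => phi z * conjf phi z) y) x).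
Proof.
by apply: functional_extensionality => x; rewrite normCK /cstf /conjf mulN1r.
Qed.

Lemma sm_F (C : numClosedFieldType) (M : Type) (P : phframe C M) (phi : fn C M) :
  ph_axioms P -> smooth P phi -> (forall x, `|phi x| < 1) -> smooth P (Ff phi).
Proof.
move=> HP sp hphi.
have := sm_invsqrt HP (f := fun x => 1 - `|phi x| ^+ 2).
rewrite /Ff; apply.
- rewrite gg_eq; apply: (sm_add HP); first exact: sm_cst.
  apply: (sm_mul HP); first exact: sm_cst.
  exact: (sm_mul HP sp (sm_conj HP sp)).
- move=> x; by rewrite subr_gt0 exprn_ilt1.
Qed.

Lemma dF (C : numClosedFieldType) (M : Type) (P : phframe C M) (phi : fn C M) X :
  ph_axioms P -> smooth P phi -> (forall x, `|phi x| < 1) -> sder P X ->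
  forall x, X (Ff phi) x =
    Ff phi x ^+ 3 * ((phi x)^* * X phi x + phi x * X (conjf phi) x) / 2%:R.
Proof.
move=> HP sp hphi [Xc Xa Xm] x.
set F := Ff phi.
have sF : smooth P F by exact: sm_F.
set gg := (fun x => cstf (M:=M) 1 x + (fun y => cstf (M:=M) (-1) y * (fun z => phi z * conjf phi z) y) x).
have spp : smooth P (fun z => phi z * conjf phi z) by exact: (sm_mul HP sp (sm_conj HP sp)).
have sg : smooth P gg.
  apply: (sm_add HP); first exact: sm_cst.
  apply: (sm_mul HP); [exact: sm_cst|exact: spp].
have sFF : smooth P (fun y => F y * F y) by exact: sm_mul.
have H : (fun x => (fun y => F y * F y) x * gg x) = cstf (M:=M) 1.
  apply: functional_extensionality => y; rewrite /gg /cstf /conjf mulN1r /=.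
  by rewrite /F -expr2; case: (F_props hphi y).
have := congr1 X H; rewrite Xc Xm // Xm // Xa; [|exact: sm_cst|exact: (sm_mul HP (sm_cst HP _) spp)].
rewrite Xm; [|exact: sm_cst|exact: spp]; rewrite Xm // ?Xc; last exact: sm_conj.
move/(congr1 (fun h => h x)) => /= E.
have [_ _ hF2 _] := F_props hphi x.
rewrite (algF (g := gg x) _ E) /gg /cstf /conjf; first by field.
by rewrite mulN1r /F hF2.
Qed.

Lemma conj_eq2 (C : numClosedFieldType) (X Y a b c t z w : C) :
  X^* - Y^* = a * t^* + b * z^* + c * w^* -> X - Y = a^* * t + b^* * z + c^* * w.
Proof.
move/(congr1 (fun u => u^*)); by rewrite rmorphB !rmorphD !rmorphM /= !conjCK.
Qed.

Lemma brZZb_conj (C : numClosedFieldType) (M : Type) (P : phframe C M) :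
  ph_axioms P -> forall x, vZb (brZZb P) x = - (vZ (brZZb P) x)^*.
Proof.
move=> HP x.
set v := brZZb P.
suff key : forall g, smooth P g -> forall y,
  (vT v y + (vT v y)^*) * Tder P g y + (vZ v y + (vZb v y)^*) * Zder P g y
  + (vZb v y + (vZ v y)^*) * Zbder P g y = 0.
  have [_ _ /eqP] := frame_indep HP (a := fun x => vT v x + (vT v x)^*)
    (b := fun x => vZ v x + (vZb v x)^*) (c := fun x => vZb v x + (vZ v x)^*) key x.
  by rewrite addr_eq0 => /eqP.
move=> g sg y.
have h1 := congr1 (fun h => h y) (br_ZZb HP sg).
have h2 := congr1 (fun h => h y) (br_ZZb HP (sm_conj HP sg)).
move: h1 h2; rewrite /eval1 /d0 /= -(conj_Z P g) -(conj_Zb P g) -(conj_Zb P (Zder P g)).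
rewrite -(conj_Z P (Zbder P g)) (T_real HP sg) => h1 /conj_eq2 h2.
have : 0 = (Zder P (Zbder P g) y - Zbder P (Zder P g) y) +
           (Zbder P (Zder P g) y - Zder P (Zbder P g) y) by ring.
rewrite h1 h2 => ->; ring.
Qed.

Lemma brTZ_conj (C : numClosedFieldType) (M : Type) (P : phframe C M) :
  ph_axioms P -> forall x, vZb (brTZ P) x = (vZ (brTZb P) x)^* /\
                           vZ (brTZ P) x = (vZb (brTZb P) x)^*.
Proof.
move=> HP x.
set u := brTZ P; set w := brTZb P.
have [Zs _ _ _] := Z_der HP; have [Ts _ _ _] := T_der HP.
suff key : forall g, smooth P g -> forall y,
  (vT u y - (vT w y)^*) * Tder P g y + (vZ u y - (vZb w y)^*) * Zder P g y
  + (vZb u y - (vZ w y)^*) * Zbder P g y = 0.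
  have [_ /eqP hb /eqP hc] := frame_indep HP (a := fun x => vT u x - (vT w x)^*)
    (b := fun x => vZ u x - (vZb w x)^*) (c := fun x => vZb u x - (vZ w x)^*) key x.
  by move: hb hc; rewrite !subr_eq0 => /eqP -> /eqP ->.
move=> g sg y.
have h1 := congr1 (fun h => h y) (br_TZ HP sg).
have h2 := congr1 (fun h => h y) (br_TZb HP (sm_conj HP sg)).
move: h1 h2; rewrite /eval1 /d0 /= -(conj_Z P g) -(conj_Zb P g) (T_real HP sg).
rewrite -(conj_Z P (Tder P g)) (T_real HP (Zs _ sg)) => h1 /conj_eq2 h2.
have : 0 = (Tder P (Zder P g) y - Zder P (Tder P g) y) -
           (Tder P (Zder P g) y - Zder P (Tder P g) y) by ring.
rewrite {1}h1 h2 => ->; ring.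
Qed.

Lemma eq_lin (C : numClosedFieldType) (a b c d : C) : a = b -> c - d = b - a -> c = d.
Proof. by move=> -> /eqP; rewrite subrr subr_eq0 => /eqP. Qed.

Lemma br_vZ (C : numClosedFieldType) (M : Type) (P : phframe C M) :
  ph_axioms P -> forall x,
  [/\ vZ (brZZb P) x = - fZb (omega P) x, vZ (brTZ P) x = fT (omega P) x &
      vZ (brTZb P) x = - Ator P x].
Proof.
move=> HP x.
have [_ S2 _] := structure HP.
have [_ Zc _ _] := Z_der HP; have [_ Tc _ _] := T_der HP; have [Zbc _ _] := Zb_sder HP.
have e1 := congr1 (fun f => gZZb f x) S2.
have e2 := congr1 (fun f => gTZ f x) S2.
have e3 := congr1 (fun f => gTZb f x) S2.
move: e1 e2 e3; rewrite /= /theta1 /= !Zc !Zbc !Tc /eval1 /cstf /conj1 /conjf /= !rmorph0 !rmorph1.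
move=> e1 e2 e3; split.
- by apply: (eq_lin e1); ring.
- by apply: (eq_lin e2); ring.
- by apply: (eq_lin e3); ring.
Qed.

Lemma om_real (C : numClosedFieldType) (M : Type) (P : phframe C M) :
  ph_axioms P -> forall x,
  [/\ (fT (omega P) x)^* = - fT (omega P) x, (fZb (omega P) x)^* = - fZ (omega P) x &
      (fZ (omega P) x)^* = - fZb (omega P) x].
Proof.
move=> HP x; have [_ _ S3] := structure HP.
have e1 := congr1 (fun f => fT f x) S3.
have e2 := congr1 (fun f => fZ f x) S3.
have e3 := congr1 (fun f => fZb f x) S3.
move: e1 e2 e3; rewrite /= /conjf /cstf => e1 e2 e3.
by split; apply/eqP; rewrite -addr_eq0 addrC ?e1 ?e2 ?e3.
Qed.

Lemma br_all (C : numClosedFieldType) (M : Type) (P : phframe C M) :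
  ph_axioms P -> forall x,
  [/\ vZ (brZZb P) x = - fZb (omega P) x, vZb (brZZb P) x = - fZ (omega P) x &
      vZ (brTZ P) x = fT (omega P) x] /\ [/\ vZb (brTZ P) x = - (Ator P x)^*,
      vZ (brTZb P) x = - Ator P x & vZb (brTZb P) x = - fT (omega P) x].
Proof.
move=> HP x.
have [h1 h2 h3] := br_vZ HP x.
have [r1 r2 r3] := om_real HP x.
have [c1 c2] := brTZ_conj HP x.
do 2 split => //.
- by rewrite brZZb_conj // h1 rmorphN /= r2 opprK.
- by rewrite c1 h3 rmorphN.
- by rewrite -[vZb _ _]conjCK -c2 h2 r1.
Qed.

Lemma eq_lin' (C : numClosedFieldType) (a b c d : C) : a = b -> c - d = a - b -> c = d.
Proof. by move=> -> /eqP; rewrite subrr subr_eq0 => /eqP. Qed.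

Lemma one_sub_neq0 (C : numClosedFieldType) (p : C) : `|p| < 1 -> 1 - p * p^* != 0.
Proof.
move=> hp; rewrite -normCK subr_eq0 eq_sym lt_eqF //.
by rewrite exprn_ilt1.
Qed.

Lemma uniq_T (C : numClosedFieldType) (F p oT wT a b : C) : F != 0 -> `|p| < 1 ->
  F * oT + F * p^* * a = F * wT + F * p^* * b ->
  F * p * oT + F * a = F * p * wT + F * b -> oT = wT /\ a = b.
Proof.
move=> hF hp e1 e2.
have e1' : (oT - wT) = - (p^* * (a - b)).
  apply: (mulfI hF); apply/eqP; rewrite -subr_eq0; apply/eqP.
  transitivity ((F * oT + F * p^* * a) - (F * wT + F * p^* * b)); first ring.
  by rewrite e1 subrr.
have e2' : p * (oT - wT) + (a - b) = 0.
  apply: (mulfI hF); rewrite mulr0.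
  transitivity ((F * p * oT + F * a) - (F * p * wT + F * b)); first ring.
  by rewrite e2 subrr.
have hab : a - b = 0.
  have : (1 - p * p^*) * (a - b) = 0 by rewrite -e2' e1'; ring.
  by move/eqP; rewrite mulf_eq0 (negPf (one_sub_neq0 hp)) /= => /eqP.
move: e1'; rewrite hab mulr0 oppr0 => /eqP; rewrite subr_eq0 => /eqP ->.
by move/eqP: hab; rewrite subr_eq0 => /eqP ->.
Qed.

Lemma uniq_Z (C : numClosedFieldType) (F p oZ oZb wZ wZb : C) : F != 0 -> `|p| < 1 ->
  F * oZb + F * p * oZ = F * wZb + F * p * wZ ->
  oZ + oZb^* = 0 -> wZ + wZb^* = 0 -> oZ = wZ /\ oZb = wZb.
Proof.
move=> hF hp e1 r1 r2.
have e1' : oZb - wZb = - (p * (oZ - wZ)).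
  apply: (mulfI hF).
  transitivity (((F * oZb + F * p * oZ) - (F * wZb + F * p * wZ)) - F * p * (oZ - wZ)); first ring.
  by rewrite e1 subrr; ring.
have e2 : oZ - wZ = - (oZb - wZb)^*.
  apply/eqP; rewrite rmorphB /= -subr_eq0.
  apply/eqP; transitivity ((oZ + oZb^*) - (wZ + wZb^*)); first ring.
  by rewrite r1 r2 subrr.
have hz : oZ - wZ = 0.
  have e3 : oZ - wZ = p^* * (oZ - wZ)^*.
    by rewrite {1}e2 e1' rmorphN rmorphM /= opprK.
  have hn : `|oZ - wZ| = `|p| * `|oZ - wZ|.
    by rewrite {1}e3 normrM !norm_conjC.
  case: (eqVneq (oZ - wZ) 0) => // hnz.
  have : (1 - `|p|) * `|oZ - wZ| = 0 by rewrite mulrBl mul1r -hn subrr.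
  move/eqP; rewrite mulf_eq0 normr_eq0 (negPf hnz) orbF subr_eq0 => /eqP h.
  by move: hp; rewrite -h ltxx.
move: e1'; rewrite hz mulr0 oppr0 => /eqP; rewrite !subr_eq0 => /eqP ->.
by move/eqP: hz; rewrite subr_eq0 => /eqP ->.
Qed.

Lemma F1_of (C : numClosedFieldType) (F : C) : 0 < F -> F ^+ 2 * (1 - 0 * 0^*) = 1 -> F = 1.
Proof.
move=> F0; rewrite mul0r subr0 mulr1 => /eqP; rewrite sqrf_eq1 => /orP [/eqP //| /eqP h].
by move: F0; rewrite h oppr_gt0 ltr10.
Qed.

Ltac alg_close2 p F F0 F2 :=
  let hp0 := fresh "hp0" in let hF1 := fresh "hF1" in let hFn := fresh "hFn" in
  let hpc := fresh "hpc" in let e := fresh "e" in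
  destruct (eqVneq p 0) as [hp0|hp0];
  [ assert (hF1 : F = 1) by (apply: (F1_of F0); by rewrite -hp0);
    rewrite hF1 hp0 conjC0; by field
  | assert (hFn : F != 0) by exact: lt0r_neq0 F0;
    assert (e : F ^+ 2 - 1 = F ^+ 2 * p * p^*) by (rewrite -{1}F2; ring);
    assert (hpc : p^* = (F ^+ 2 - 1) / (F ^+ 2 * p)) by (rewrite e; field; by rewrite hp0 hFn);
    rewrite hpc; field; by rewrite ?hp0 ?hFn ].

Ltac alg_close phi x F0 F2 := alg_close2 (phi x) (Ff phi x) F0 F2.

Theorem proposition4p1 (C : numClosedFieldType) (M : Type)
  (P : phframe C M) (HP : ph_axioms P) (phi : M -> C) :
  smooth P phi -> (forall x, `|phi x| < 1) ->
  TW P (theta1_phi phi) (omega_phi P phi) (A_phi P phi) /\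
  (forall (om : form1 C M) (A : M -> C),
      TW P (theta1_phi phi) om A ->
      om = omega_phi P phi /\ A = A_phi P phi).
Proof.
move=> sp hphi.
have sF := sm_F HP sp hphi.
have hZF := dF HP sp hphi (der_sder (Z_der HP)).
have hTF := dF HP sp hphi (der_sder (T_der HP)).
have hZbF := dF HP sp hphi (Zb_sder HP).
have hZpc : forall x, Zder P (conjf phi) x = (Zbder P phi x)^* by move=> x; rewrite -conj_Zb.
have hZbpc : forall x, Zbder P (conjf phi) x = (Zder P phi x)^* by move=> x; rewrite -conj_Z.
have hTpc : forall x, Tder P (conjf phi) x = (Tder P phi x)^* by move=> x; rewrite (T_real HP sp).
have [S1 S2 S3] := structure HP.
have [_ Zc _ _] := Z_der HP; have [_ Tc _ _] := T_der HP; have [Zbc _ _] := Zb_sder HP.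
have hZneg := dnegmul HP (der_sder (Z_der HP)) sF sp.
have hTneg := dnegmul HP (der_sder (T_der HP)) sF sp.
have hZbneg := dnegmul HP (Zb_sder HP) sF sp.
have Ex : TW P (theta1_phi phi) (omega_phi P phi) (A_phi P phi).
  split.
  - rewrite S1; congr scale2.
    rewrite /wedge; congr Form2; apply: functional_extensionality => x;
      have [F0 Fc F2 _] := F_props hphi x;
      rewrite /theta1 /theta1_phi /conj1 /conjf /cstf /= ?rmorphN ?rmorphM ?rmorph0 ?rmorph1 /= ?Fc;
      first [ring | apply: (eq_lin F2); ring].
  - rewrite /d1 /add2 /wedge /theta1_phi /=.
    rewrite hZneg hTneg ?Zbc ?Zc ?Tc.
    congr Form2; apply: functional_extensionality => x;
      have [[b1 b2 b3] [b4 b5 b6]] := br_all HP x;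
      have [F0 Fc F2 _] := F_props hphi x;
      have [r1 r2 r3] := om_real HP x;
      rewrite /eval1 /= ?b1 ?b2 ?b3 ?b4 ?b5 ?b6 /B11 /B12 /B13 /A_phi /om11 /om1b1b /Abar /phib /conj1 /conjf /cstf /=;
      rewrite ?hZF ?hZbF ?hTF ?hZpc ?hZbpc ?hTpc ?rmorphN ?rmorphM /= ?r1 ?r2 ?r3 ?Fc ?normCK;
      alg_close phi x F0 F2.
  - rewrite /add1 /zero1; congr Form1; apply: functional_extensionality => x;
      have [F0 Fc F2 _] := F_props hphi x;
      have [r1 r2 r3] := om_real HP x;
      rewrite /omega_phi /B11 /B12 /B13 /om11 /om1b1b /Abar /phib /conj1 /conjf /cstf /=;
      rewrite ?hZF ?hZbF ?hTF ?hZpc ?hZbpc ?hTpc ?normCK;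
      move: (Zbder P phi x) (Ff phi x) F0 Fc F2 => Zbp F F0 Fc F2;
      rewrite ?(rmorphD, rmorphB, rmorphN, rmorphM, fmorphV, rmorphXn, rmorph_nat, rmorph1) /= ?conjCK;
      rewrite ?r1 ?r2 ?r3 ?Fc ?rmorph1;
      alg_close2 (phi x) F F0 F2.
split => // om A [_ T2 T3].
have [_ E2 E3] := Ex.
have E := etrans (esym T2) E2.
case: om T2 T3 E => oT oZ oZb T2 T3 E.
have hx : forall x, [/\ oT x = fT (omega_phi P phi) x, oZ x = fZ (omega_phi P phi) x,
     oZb x = fZb (omega_phi P phi) x & A x = A_phi P phi x].
  move=> x.
  move: (omega_phi P phi) (A_phi P phi) E3 E => [wT wZ wZb] Aw E3 E /=.
  have [F0 Fc F2 _] := F_props hphi x.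
  have hFn : Ff phi x != 0 by exact: lt0r_neq0.
  have e1 := congr1 (fun f => gZZb f x) E.
  have e2 := congr1 (fun f => gTZ f x) E.
  have e3 := congr1 (fun f => gTZb f x) E.
  have t2 := congr1 (fun f => fZ f x) T3.
  have t1 := congr1 (fun f => fT f x) T3.
  have u2 := congr1 (fun f => fZ f x) E3.
  have u1 := congr1 (fun f => fT f x) E3.
  move: e1 e2 e3 t1 t2 u1 u2.
  rewrite /wedge /add2 /theta1_phi /scale1 /conj1 /theta /add1 /zero1 /conjf /cstf /=.
  rewrite ?rmorphN ?rmorphM /= ?Fc ?rmorph0 => e1 e2 e3 t1 t2 u1 u2.
  have h2 : Ff phi x * oT x + Ff phi x * (phi x)^* * A x =
            Ff phi x * wT x + Ff phi x * (phi x)^* * Aw x.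
    by first [apply: (eq_lin e2); ring | apply: (eq_lin' e2); ring].
  have h3 : Ff phi x * phi x * oT x + Ff phi x * A x =
            Ff phi x * phi x * wT x + Ff phi x * Aw x.
    by first [apply: (eq_lin e3); ring | apply: (eq_lin' e3); ring].
  have h1 : Ff phi x * oZb x + Ff phi x * phi x * oZ x =
            Ff phi x * wZb x + Ff phi x * phi x * wZ x.
    by first [apply: (eq_lin e1); ring | apply: (eq_lin' e1); ring].
  have [-> ->] := uniq_T hFn (hphi x) h2 h3.
  by have [-> ->] := uniq_Z hFn (hphi x) h1 t2 u2.
have -> : A = A_phi P phi by apply: functional_extensionality => x; case: (hx x).
have -> : oT = fT (omega_phi P phi) by apply: functional_extensionality => x; case: (hx x).
have -> : oZ = fZ (omega_phi P phi) by apply: functional_extensionality => x; case: (hx x).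
have -> : oZb = fZb (omega_phi P phi) by apply: functional_extensionality => x; case: (hx x).
by split => //; case: (omega_phi P phi).
Qed.
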